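(* Consider the ergodic Markov process described in the context. The dimension of the (complex) vector space of absolutely convergent solutions $q:W\to\mathbb C$ of the inner equations is at most $2^cK$.
   Context: Fix integers $c\ge 1$ and $K\ge 1$. Consider an irreducible continuous-time Markov process on the state space $V\cup W$, where $V$ is a finite set and $W=\{\mathbf n=(n_0,n_1,\dots,n_c): n_0\in\{0,1,2,\dots\},\ n_i\in\{0,1\},\ i=1,\dots,c\}$. For each $i\in\{1,\dots,c\}$ and each integer $k\le K$ there are nonnegative rates $a_{k,i},b_{k,i},c_{k,i},d_{k,i}$. From a state $\mathbf n\in W$, for each $i$ and each $k\in\{-n_0,\dots,K\}$, the process jumps (changing only coordinates $0$ and $i$) from $(n_0,n_i)=(n_0,0)$ to $(n_0+k,1)$ at rate $a_{k,i}$ and to $(n_0+k,0)$ at rate $b_{k,i}$, and from $(n_0,n_i)=(n_0,1)$ to $(n_0+k,1)$ at rate $c_{k,i}$ and to $(n_0+k,0)$ at rate $d_{k,i}$; moreover from $\mathbf n$ it jumps into $V$ with total rate $\sum_{i=1}^c\sum_{k\le -n_0-1}\bigl((1-n_i)(a_{k,i}+b_{k,i})+n_i(c_{k,i}+d_{k,i})\bigr)$. There are no other transitions out of $W$. From states in $V$ no transitions are possible to states $\mathbf n\in W$ with $n_0\ge K$. All total outgoing rates are finite. The process is assumed ergodic. Let $e_i$ be the vector of length $c+1$ (indexed $0,\dots,c$) with a $1$ in position $i$ and zeros elsewhere. The inner equations are, for a function $q:W\to\mathbb C$ and all $\mathbf n\in W$ with $n_0\ge K$: \[\sum_{i=1}^c\sum_{k=-\infty}^K\bigl((1-n_i)(a_{k,i}+b_{k,i})+n_i(c_{k,i}+d_{k,i})\bigr)q(\mathbf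 n)=\sum_{i=1}^c\sum_{k=-\infty}^K\Bigl((1-n_i)\bigl(b_{k,i}q(\mathbf n-ke_0)+d_{k,i}q(\mathbf n-ke_0+e_i)\bigr)+n_i\bigl(a_{k,i}q(\mathbf n-ke_0-e_i)+c_{k,i}q(\mathbf n-ke_0)\bigr)\Bigr).\] A solution $q$ is called absolutely convergent if $\sum_{\mathbf n\in W}|q(\mathbf n)|<\infty$. *)

(* Defs.v *)
From Stdlib Require Import Reals ZArith Relations.
From Coquelicot Require Import Coquelicot.
From mathcomp Require Import all_boot.

Set Implicit Arguments.
Unset Strict Implicit.
Unset Printing Implicit Defensive.

(* A configuration (n_1,...,n_c) in {0,1}^c, coordinate i+1 <-> index i : 'I_c,
   n_i = 1 <-> true. *)
Definition cfg (c : nat) := {ffun 'I_c -> bool}.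
Definition Wst (c : nat) := (nat * cfg c)%type.
Definition Sst (V : finType) (c : nat) := (V + Wst c)%type.

Definition setbit (c : nat) (sg : cfg c) (i : 'I_c) (s : bool) : cfg c :=
  [ffun j => if j == i then s else sg j].

Notation "\rsum_ ( i < n ) F" := (\big[Rplus/R0]_(i < n) F)
  (at level 41, F at level 41, i, n at level 50).
Notation "\rsum_ ( i : T ) F" := (\big[Rplus/R0]_(i : T) F)
  (at level 41, F at level 41, i at level 50).

Section Rates.
Variables (c K : nat) (a b cr d : 'I_c -> Z -> R).

(* rate of the jump (n_0,n_i) = (n_0,s0) -> (n_0+k,s1) for component i:
   a_{k,i}: 0->1, b_{k,i}: 0->0, c_{k,i}: 1->1, d_{k,i}: 1->0 *)
Definition jrate (i : 'I_c) (k : Z) (s0 s1 : bool) : R :=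
  if s0 then (if s1 then cr i k else d i k) else (if s1 then a i k else b i k).

Definition trate (i : 'I_c) (k : Z) (s0 : bool) : R :=
  Rplus (jrate i k s0 true) (jrate i k s0 false).

(* Rate from n = (n0,sg) in W to m in W (m <> n):  sum over i, k in {-n0..K}
   (k = K - j, j = 0..n0+K) and target bit s1 of the jumps landing in m. *)
Definition QWW (n m : Wst c) : R :=
  \rsum_(i < c) \rsum_(j < n.1 + K + 1) \rsum_(s1 : bool)
     (if ((n.1 + K - j)%N, setbit n.2 i s1) == m
      then jrate i (Z.of_nat K - Z.of_nat j) (n.2 i) s1 else R0).

(* Total rate from n in W into V:
   sum_i sum_{k <= -n0-1} trate  (k = -n0-1-j, j >= 0). *)
Definition QWV_total (n : Wst c) : R :=
  \rsum_(i < c) Series (fun j : nat =>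
      trate i (- Z.of_nat n.1 - 1 - Z.of_nat j)%Z (n.2 i)).

(* sum_i sum_{k <= K} trate  (k = K - j, j >= 0): coefficient of q(n) in the
   left-hand side of the inner equations. *)
Definition Wtotal (sg : cfg c) : R :=
  \rsum_(i < c) Series (fun j : nat => trate i (Z.of_nat K - Z.of_nat j)%Z (sg i)).

(* The i-th summand on the right-hand side, at k = K - j, for n = (n0,sg)
   with n0 >= K (so that n0 - k = n0 - K + j >= 0). *)
Definition rhs_term (q : nat -> cfg c -> C) (n0 : nat) (sg : cfg c)
    (i : 'I_c) (j : nat) : C :=
  let k := (Z.of_nat K - Z.of_nat j)%Z in
  let m0 := (n0 - K + j)%nat in
  if sg i then
    Cplus (Cmult (RtoC (a i k)) (q m0 (setbit sg i false)))
          (Cmult (RtoC (cr i k)) (q m0 sg))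
  else
    Cplus (Cmult (RtoC (b i k)) (q m0 sg))
          (Cmult (RtoC (d i k)) (q m0 (setbit sg i true))).

(* q : W -> C solves the inner equations (for all n with n0 >= K).  The
   inner series over k are required to converge (they do automatically for
   absolutely convergent q and summable rates). *)
Definition inner_solution (q : nat -> cfg c -> C) : Prop :=
  forall (n0 : nat) (sg : cfg c), (K <= n0)%N ->
    exists l : 'I_c -> C,
      (forall i, is_series (rhs_term q n0 sg i) (l i)) /\
      Cmult (q n0 sg) (RtoC (Wtotal sg)) = \big[Cplus/RtoC 0]_(i < c) l i.

Definition abs_convergent (q : nat -> cfg c -> C) : Prop :=
  ex_series (fun n0 : nat => \rsum_(sg : cfg c) Cmod (q n0 sg)).

End Rates.

Definition lin_indep (c m : nat) (qs : 'I_m -> nat -> cfg c -> C) : Prop :=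
  forall alpha : 'I_m -> C,
    (forall n0 sg, \big[Cplus/RtoC 0]_(j < m) Cmult (alpha j) (qs j n0 sg) = RtoC 0) ->
    forall j, alpha j = RtoC 0.

Section Process.
Variables (V : finType) (c K : nat) (a b cr d : 'I_c -> Z -> R).
(* Qr x y = transition rate from x to y (only used for x <> y) *)
Variable Qr : Sst V c -> Sst V c -> R.

Definition summableS (f : Sst V c -> R) : Prop :=
  ex_series (fun n0 : nat => \rsum_(sg : cfg c) f (inr (n0, sg))).
Definition sumS (f : Sst V c -> R) : R :=
  Rplus (\rsum_(v : V) f (inl v))
        (Series (fun n0 : nat => \rsum_(sg : cfg c) f (inr (n0, sg)))).

Definition offQ (x y : Sst V c) : R := if y == x then R0 else Qr x y.
Definition outrate (x : Sst V c) : R := sumS (offQ x).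

Definition process_structure : Prop :=
  (forall i k, (k <= Z.of_nat K)%Z ->
     Rle R0 (a i k) /\ Rle R0 (b i k) /\ Rle R0 (cr i k) /\ Rle R0 (d i k)) /\
  (* finite total outgoing rates out of W *)
  (forall i, ex_series (fun j : nat => a i (Z.of_nat K - Z.of_nat j)%Z) /\
             ex_series (fun j : nat => b i (Z.of_nat K - Z.of_nat j)%Z) /\
             ex_series (fun j : nat => cr i (Z.of_nat K - Z.of_nat j)%Z) /\
             ex_series (fun j : nat => d i (Z.of_nat K - Z.of_nat j)%Z)) /\
  (forall x y, x <> y -> Rle R0 (Qr x y)) /\
  (forall n m : Wst c, n <> m ->
     Qr (inr n) (inr m) = QWW K a b cr d n m) /\
  (forall n : Wst c,
     \rsum_(v : V) Qr (inr n) (inl v) = QWV_total a b cr d n) /\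
  (forall (v : V) (n : Wst c), (K <= n.1)%N -> Qr (inl v) (inr n) = R0) /\
  (forall v : V, summableS (offQ (inl v))).

Definition qstep (x y : Sst V c) : Prop := x <> y /\ Rlt R0 (Qr x y).
Definition irreducible : Prop :=
  forall x y, clos_refl_trans (Sst V c) qstep x y.

Definition stationary (pi : Sst V c -> R) : Prop :=
  (forall x, Rle R0 (pi x)) /\ summableS pi /\ sumS pi = R1 /\
  forall y,
    summableS (fun x => if x == y then R0 else Rmult (pi x) (Qr x y)) /\
    Rmult (pi y) (outrate y) =
      sumS (fun x => if x == y then R0 else Rmult (pi x) (Qr x y)).

(* ergodic = irreducible and positive recurrent; since all jump rates here are
   uniformly bounded the process is non-explosive, and then positive
   recurrence is equivalent to the existence of a stationary distribution. *)
Definition ergodic : Prop := irreducible /\ exists pi, stationary pi.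

End Process.

(* Main.v *)
Require Import Defs.
From Stdlib Require Import Reals ZArith Relations.
From Coquelicot Require Import Coquelicot.
From mathcomp Require Import all_boot.

From HB Require Import structures.
From Stdlib Require Import Lra Lia Classical.
From mathcomp Require Import zify.
From mathcomp Require all_algebra Rstruct.
Unset Printing Implicit Defensive.

Open Scope R_scope.
Module LA.
Import all_algebra Rstruct.
Import GRing.Theory.
Local Open Scope ring_scope.
Lemma test (I J : finType) (A : I -> J -> R) : (#|J| < #|I|)%N ->
  exists beta : I -> R, (exists i, beta i <> 0%R) /\
    forall j, \big[Rplus/R0]_(i : I) Rmult (beta i) (A i j) = R0.
Proof.
move=> hlt.
pose M : 'M[R]_(#|I|, #|J|) := \matrix_(i, j) A (enum_val i) (enum_val j).
have : kermx M != 0.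
  rewrite kermx_eq0. apply/negP => /row_freeP [B HB].
  have := mxrank1 R #|I|. rewrite -HB. move=> h.
  have := mxrankM_maxl M B. rewrite h => h2.
  have := rank_leq_col M. move=> h3. have := leq_trans h2 h3. by rewrite leqNgt hlt.
case/rowV0Pn => v /sub_kermxP Hv Hnz.
exists (fun i => v 0 (enum_rank i)). split.
  apply: Classical_Prop.NNPP => Hall. move/negP: Hnz; apply. apply/eqP/rowP => k.
  rewrite mxE. have [//|Hk] := (v 0 k =P 0). exfalso; apply: Hall.
  by exists (enum_val k); rewrite enum_valK.
move=> j.
have := congr1 (fun N : 'rV[R]_#|J| => N 0 (enum_rank j)) Hv. rewrite !mxE => H0. rewrite -[RHS]H0.
rewrite [RHS](reindex enum_rank) /=; last first.
  by exists enum_val => x _; rewrite ?enum_valK ?enum_rankK.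
apply: eq_bigr => i _. by rewrite mxE !enum_rankK.
Qed.
End LA.

Open Scope R_scope.

HB.instance Definition _ := Monoid.isComLaw.Build R R0 Rplus
  (fun x y z => esym (Rplus_assoc x y z)) Rplus_comm Rplus_0_l.

Open Scope R_scope.

Lemma sum_n_big (a : nat -> R) N : sum_n a N = \big[Rplus/R0]_(j < N.+1) a j.
Proof.
elim: N => [|N IH]; first by rewrite sum_O big_ord_recr big_ord0 /=; ring.
by rewrite sum_Sn IH [in RHS]big_ord_recr.
Qed.

Lemma sum_n_R0 (N : nat) : sum_n (fun _ : nat => 0) N = 0.
Proof. elim: N => [|N IH]; rewrite ?sum_O // sum_Sn IH /plus /=; ring. Qed.

Lemma is_series_zero : is_series (fun _ : nat => 0) 0.
Proof.
rewrite /is_series. apply: (filterlim_ext (fun _ => 0)).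
  by move=> N; rewrite sum_n_R0.
exact: filterlim_const.
Qed.

Lemma Series_zero : Series (fun _ => 0) = 0.
Proof. exact: is_series_unique is_series_zero. Qed.

Lemma Series_ge0 (a : nat -> R) : (forall n, 0 <= a n) -> ex_series a -> 0 <= Series a.
Proof.
move=> Ha Hex. rewrite -Series_zero. apply: Series_le => // n. split; [lra|exact: Ha].
Qed.

Lemma sum_n_nondecr (a : nat -> R) N M : (forall n, 0 <= a n) -> (N <= M)%nat ->
  sum_n a N <= sum_n a M.
Proof.
move=> Ha /leP. elim: M => [|M IH] H.
  have -> : N = 0%nat by lia. lra.
case: (Nat.eq_dec N M.+1) => [->|HN]; first lra.
rewrite sum_Sn /plus /=. have := Ha M.+1. have := IH ltac:(lia). lra.
Qed.

Lemma sum_n_le_Series (a : nat -> R) N : (forall n, 0 <= a n) -> ex_series a ->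
  sum_n a N <= Series a.
Proof.
move=> Ha [l Hl]. rewrite (is_series_unique _ _ Hl).
have := is_lim_seq_le_loc (fun _ => sum_n a N) (sum_n a) (sum_n a N) l.
apply => //; last exact: is_lim_seq_const.
exists N => n Hn. apply: sum_n_nondecr => //. exact/leP.
Qed.

Lemma term_le_Series (a : nat -> R) N : (forall n, 0 <= a n) -> ex_series a ->
  a N <= Series a.
Proof.
move=> Ha Hex. apply: Rle_trans (sum_n_le_Series a N Ha Hex).
case: N => [|N]; first by rewrite sum_O; lra.
rewrite sum_Sn /plus /=. have := sum_n_nondecr a N N Ha (leqnn _).
have : 0 <= sum_n a N.
  have := sum_n_nondecr a 0 N Ha (leq0n _). rewrite sum_O. have := Ha 0%nat. lra.
lra.
Qed.

Lemma Series_eq0 (a : nat -> R) N : (forall n, 0 <= a n) -> ex_series a ->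
  Series a = 0 -> a N = 0.
Proof.
move=> Ha Hex H0. have := term_le_Series a N Ha Hex. have := Ha N. lra.
Qed.

Lemma ex_series_bounded (a : nat -> R) B : (forall n, 0 <= a n) ->
  (forall N, sum_n a N <= B) -> ex_series a /\ Series a <= B.
Proof.
move=> Ha HB.
have Hl : ex_finite_lim_seq (sum_n a).
  apply: (ex_finite_lim_seq_incr _ B) => // n.
  by rewrite sum_Sn /plus /=; have := Ha n.+1; lra.
have Hc := Lim_seq_correct' _ Hl.
have Hex : ex_series a by exists (real (Lim_seq (sum_n a))).
split => //.
have := is_lim_seq_le (sum_n a) (fun _ => B) _ _ HB Hc (is_lim_seq_const B).
by rewrite /Series /=.
Qed.

Lemma is_series_bigseq (T : eqType) (r : seq T) (h : T -> nat -> R) :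
  (forall i, ex_series (h i)) ->
  is_series (fun M => \big[Rplus/R0]_(i <- r) h i M) (\big[Rplus/R0]_(i <- r) Series (h i)).
Proof.
move=> Hh. elim: r => [|x r IH].
  rewrite big_nil. apply: (is_series_ext (fun _ => 0)); last exact: is_series_zero.
  by move=> n; rewrite big_nil.
rewrite big_cons. apply: (is_series_ext (fun M => plus (h x M) (\big[Rplus/R0]_(i <- r) h i M))).
  by move=> n; rewrite big_cons.
apply: is_series_plus => //. exact: Series_correct.
Qed.

Lemma Series_big (T : finType) (h : T -> nat -> R) :
  (forall i, ex_series (h i)) ->
  Series (fun M => \big[Rplus/R0]_(i : T) h i M) = \big[Rplus/R0]_(i : T) Series (h i).
Proof. move=> Hh. apply: is_series_unique. exact: is_series_bigseq. Qed.

Lemma ex_series_big (T : finType) (h : T -> nat -> R) :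
  (forall i, ex_series (h i)) -> ex_series (fun M => \big[Rplus/R0]_(i : T) h i M).
Proof. move=> Hh. eexists. exact: is_series_bigseq. Qed.

Lemma big_ge0 (T : finType) (F : T -> R) : (forall i, 0 <= F i) -> 0 <= \big[Rplus/R0]_(i : T) F i.
Proof. move=> H. apply: (big_ind (fun x => 0 <= x)) => //; [lra | move=> x y; lra]. Qed.

Lemma big_le (T : finType) (F G : T -> R) : (forall i, F i <= G i) ->
  \big[Rplus/R0]_(i : T) F i <= \big[Rplus/R0]_(i : T) G i.
Proof. move=> H. apply: (big_ind2 (fun x y => x <= y)) => //; [lra | move=> x y z w; lra]. Qed.

Lemma big_term_le (T : finType) (F : T -> R) j : (forall i, 0 <= F i) -> F j <= \big[Rplus/R0]_(i : T) F i.
Proof.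
move=> H. rewrite (bigD1 j) //=. have : 0 <= \big[Rplus/R0]_(i | i != j) F i.
  apply: (big_ind (fun x => 0 <= x)) => //; [lra | move=> x y; lra].
lra.
Qed.

Lemma big_eq0 (T : finType) (F : T -> R) j : (forall i, 0 <= F i) ->
  \big[Rplus/R0]_(i : T) F i = 0 -> F j = 0.
Proof. move=> H H0. have := big_term_le _ _ j H. have := H j. lra. Qed.

Lemma big_Rabs (T : finType) (F : T -> R) :
  Rabs (\big[Rplus/R0]_(i : T) F i) <= \big[Rplus/R0]_(i : T) Rabs (F i).
Proof.
apply: (big_ind2 (fun x y => Rabs x <= y)).
- rewrite Rabs_R0; lra.
- move=> x y z w H1 H2. have := Rabs_triang x z. lra.
- move=> i _; lra.
Qed.

Lemma big_scal_l (T : finType) (c : R) (F : T -> R) :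
  c * (\big[Rplus/R0]_(i : T) F i) = \big[Rplus/R0]_(i : T) (c * F i).
Proof.
apply: (big_rec2 (fun x y => c * x = y)); first ring.
move=> i x y _ <-; ring.
Qed.

Lemma big_opp (T : finType) (F : T -> R) :
  Ropp (\big[Rplus/R0]_(i : T) F i) = \big[Rplus/R0]_(i : T) (- F i).
Proof.
apply: (big_rec2 (fun x y => - x = y)); first ring.
move=> i x y _ <-; ring.
Qed.

Lemma sum_n_Series (a : nat -> nat -> R) N : (forall m, ex_series (a m)) ->
  Series (fun n => sum_n (fun m => a m n) N) = sum_n (fun m => Series (a m)) N.
Proof.
move=> Ha. rewrite sum_n_big (Series_ext _ (fun n => \big[Rplus/R0]_(j < N.+1) a j n)).
  by rewrite (Series_big _ (fun (j : 'I_N.+1) => a j)).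
by move=> n; rewrite sum_n_big.
Qed.

Lemma fubini_nonneg (a : nat -> nat -> R) :
  (forall m n, 0 <= a m n) -> (forall m, ex_series (a m)) ->
  ex_series (fun m => Series (a m)) ->
  (forall n, ex_series (fun m => a m n)) /\
  ex_series (fun n => Series (fun m => a m n)) /\
  Series (fun n => Series (fun m => a m n)) = Series (fun m => Series (a m)).
Proof.
move=> Ha Hm HS.
have Hcol : forall n, ex_series (fun m => a m n).
  move=> n. apply: (ex_series_le _ (fun m => Series (a m))) => // m.
  rewrite /norm /= /abs /= Rabs_pos_eq //. exact: term_le_Series.
have Hpos : forall n, 0 <= Series (fun m => a m n).
  move=> n; exact: Series_ge0.
have Hle : forall N, sum_n (fun n => Series (fun m => a m n)) N <= Series (fun m => Series (a m)).
  move=> N. rewrite -sum_n_Series //. apply: Series_le => //.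
  move=> m. split.
    rewrite sum_n_big. apply: big_ge0 => i; exact: Ha.
  rewrite -[X in _ <= X](Series_ext (fun n => a m n)) //. apply: sum_n_le_Series => //.
have [Hex1 Hle1] := ex_series_bounded _ _ Hpos Hle.
split => //; split => //.
apply: Rle_antisym => //.
have Hpos2 : forall m, 0 <= Series (a m) by move=> m; apply: Series_ge0.
have Hle2 : forall M, sum_n (fun m => Series (a m)) M <= Series (fun n => Series (fun m => a m n)).
  move=> M. rewrite -sum_n_Series //. apply: Series_le => // n. split.
    rewrite sum_n_big. apply: big_ge0 => i; exact: Ha.
  exact: sum_n_le_Series.
have [_ ?] := ex_series_bounded _ _ Hpos2 Hle2. done.
Qed.

Open Scope R_scope.

Section States.
Variables (V : finType) (c : nat).
Notation S := (Sst V c).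
Implicit Types (f g : S -> R) (z u : S).

Definition bst (L : nat) (e : (V + cfg c)%type) : option S :=
  match e with
  | inl v => if L is 0%nat then Some (inl v) else None
  | inr sg => Some (inr (L, sg))
  end.
Definition fo (f : S -> R) (o : option S) : R :=
  match o with Some z => f z | None => 0 end.
Definition blk (f : S -> R) (L : nat) : R := \big[Rplus/R0]_(e : (V + cfg c)%type) fo f (bst L e).
Definition Vpart (f : S -> R) := \big[Rplus/R0]_(v : V) f (inl v).
Definition Wlev (f : S -> R) (L : nat) := \big[Rplus/R0]_(sg : cfg c) f (inr (L, sg)).

Lemma blk_split f L : blk f L = Wlev f L + (if L is 0%nat then Vpart f else 0).
Proof.
rewrite /blk big_sumType /= Rplus_comm /Wlev. congr (_ + _).
case: L => [|L] //=. by rewrite big1.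
Qed.

Lemma is_series_at0 (x : R) : is_series (fun L : nat => if L is 0%nat then x else 0) x.
Proof.
apply: is_series_decr_1. apply: (is_series_ext (fun _ => 0)) => //.
rewrite /plus /opp /= Rplus_opp_r. exact: is_series_zero.
Qed.

Lemma summable_blk f : summableS f <-> ex_series (blk f).
Proof.
rewrite /summableS. split.
- move=> [l Hl]. exists (l + Vpart f).
  apply: (is_series_ext (fun L => plus (Wlev f L) (if L is 0%nat then Vpart f else 0))).
    by move=> n; rewrite blk_split.
  apply: is_series_plus => //. exact: is_series_at0.
- move=> [l Hl]. exists (l - Vpart f).
  apply: (is_series_ext (fun L => plus (blk f L) (opp (if L is 0%nat then Vpart f else 0)))).
    move=> n; rewrite blk_split /plus /opp /= /Wlev; case: n => [|n] /=; rewrite /Vpart; lra.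
  apply: is_series_plus => //. apply: is_series_opp. exact: is_series_at0.
Qed.

Lemma sumS_blk f : summableS f -> sumS f = Series (blk f).
Proof.
move=> Hs. rewrite /sumS. have [l Hl] := Hs.
rewrite (is_series_unique _ _ Hl). symmetry. apply: is_series_unique.
apply: (is_series_ext (fun L => plus (Wlev f L) (if L is 0%nat then Vpart f else 0))).
  by move=> n; rewrite blk_split.
rewrite Rplus_comm. apply: is_series_plus => //. exact: is_series_at0.
Qed.

Lemma blk_ge0 f L : (forall z, 0 <= f z) -> 0 <= blk f L.
Proof. move=> H. apply: big_ge0 => e. case: (bst L e) => /= [z|]; [exact: H|lra]. Qed.

Lemma sumS_ge0 f : (forall z, 0 <= f z) -> summableS f -> 0 <= sumS f.
Proof.
move=> H Hs. rewrite sumS_blk //. apply: Series_ge0; first by move=> L; exact: blk_ge0.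
by apply/summable_blk.
Qed.

Definition lev (z : S) : nat := match z with inl _ => 0%nat | inr n => n.1 end.
Definition idx (z : S) : (V + cfg c)%type := match z with inl v => inl v | inr n => inr n.2 end.
Lemma bst_idx z : bst (lev z) (idx z) = Some z.
Proof. by case: z => [v|[L sg]]. Qed.

Lemma fo_ge0 f o : (forall z, 0 <= f z) -> 0 <= fo f o.
Proof. move=> H; case: o => /= [z|]; [exact: H|lra]. Qed.

Lemma sumS_term_le f z : (forall z, 0 <= f z) -> summableS f -> f z <= sumS f.
Proof.
move=> H Hs. rewrite sumS_blk //.
apply: Rle_trans (term_le_Series _ (lev z) (fun L => blk_ge0 f L H) (proj1 (summable_blk f) Hs)).
rewrite /blk. have := big_term_le _ (fun e => fo f (bst (lev z) e)) (idx z) (fun e => fo_ge0 f _ H).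
by rewrite /= bst_idx.
Qed.

Lemma sumS_eq0 f z : (forall z, 0 <= f z) -> summableS f -> sumS f = 0 -> f z = 0.
Proof. move=> H Hs H0. have := sumS_term_le f z H Hs. have := H z. lra. Qed.

Lemma summableS_ext f g : (forall z, f z = g z) -> summableS f -> summableS g.
Proof.
move=> H Hs. apply: ex_series_ext Hs => n. apply: eq_bigr => sg _. exact: H.
Qed.

Lemma sumS_ext f g : (forall z, f z = g z) -> sumS f = sumS g.
Proof.
move=> H. rewrite /sumS. congr (_ + _); first by apply: eq_bigr => v _.
apply: Series_ext => n. apply: eq_bigr => sg _. exact: H.
Qed.

Lemma summableS_plus f g : summableS f -> summableS g -> summableS (fun z => f z + g z).
Proof.
move=> Hf Hg. apply: (ex_series_ext (fun n => plus (Wlev f n) (Wlev g n))).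
  by move=> n; rewrite /plus /= /Wlev big_split.
exact: ex_series_plus.
Qed.

Lemma sumS_plus f g : summableS f -> summableS g -> sumS (fun z => f z + g z) = sumS f + sumS g.
Proof.
move=> Hf Hg. rewrite /sumS big_split /=.
rewrite (Series_ext _ (fun n => Wlev f n + Wlev g n)); last by move=> n; rewrite /Wlev big_split.
rewrite Series_plus //. rewrite /Wlev /=. lra.
Qed.

Lemma summableS_scal k f : summableS f -> summableS (fun z => k * f z).
Proof.
move=> Hf. apply: (ex_series_ext (fun n => scal k (Wlev f n))).
  by move=> n; rewrite /scal /= /mult /= /Wlev big_scal_l.
exact: ex_series_scal.
Qed.

Lemma sumS_scal k f : sumS (fun z => k * f z) = k * sumS f.
Proof.
rewrite /sumS -big_scal_l.
rewrite (Series_ext _ (fun n => k * Wlev f n)); last by move=> n; rewrite /Wlev big_scal_l.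
rewrite Series_scal_l /Wlev /=; ring.
Qed.

Lemma summableS_opp f : summableS f -> summableS (fun z => - f z).
Proof.
move=> Hf; apply: (summableS_ext (fun z => (-1) * f z)); first by move=> z; ring.
exact: summableS_scal.
Qed.

Lemma sumS_minus f g : summableS f -> summableS g -> sumS (fun z => f z - g z) = sumS f - sumS g.
Proof.
move=> Hf Hg. rewrite (sumS_ext _ (fun z => f z + (-1) * g z)); last by move=> z; ring.
rewrite sumS_plus //; last exact: summableS_scal. rewrite sumS_scal; ring.
Qed.

Lemma summableS_dom f g : (forall z, Rabs (f z) <= g z) -> summableS g -> summableS f.
Proof.
move=> H Hg. apply: (ex_series_le _ (Wlev g)) => // n.
rewrite /norm /= /abs /=. apply: Rle_trans (big_Rabs _ _) _. apply: big_le => sg. exact: H.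
Qed.

Lemma sumS_Rabs f : summableS (fun z => Rabs (f z)) -> Rabs (sumS f) <= sumS (fun z => Rabs (f z)).
Proof.
move=> Ha. have Hf : summableS f.
  apply: (summableS_dom f (fun z => Rabs (f z))) => // z; lra.
rewrite /sumS. apply: Rle_trans (Rabs_triang _ _) _. apply: Rplus_le_compat.
  exact: big_Rabs.
apply: Rle_trans (Series_Rabs _ _) _.
  apply: (ex_series_le _ (fun n => Wlev (fun z => Rabs (f z)) n)) => // n.
  rewrite /norm /= /abs /= Rabs_Rabsolu. apply: big_Rabs.
apply: Series_le => // n. split; first exact: Rabs_pos. exact: big_Rabs.
Qed.

Lemma blk_Series (g : S -> nat -> R) L : (forall z, ex_series (g z)) ->
  blk (fun z => Series (g z)) L = Series (fun M => blk (fun z => g z M) L).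
Proof.
move=> Hg. rewrite /blk.
rewrite (Series_big _ (fun e M => fo (fun z => g z M) (bst L e))).
  apply: eq_bigr => e _. case: (bst L e) => /= [z|] //. by rewrite Series_zero.
move=> e. case: (bst L e) => /= [z|] //. exists 0. exact: is_series_zero.
Qed.

Lemma fo_big (T : finType) (F : S -> T -> R) o :
  fo (fun u => \big[Rplus/R0]_(e : T) F u e) o = \big[Rplus/R0]_(e : T) fo (fun u => F u e) o.
Proof. case: o => //=. by rewrite big1. Qed.

Lemma fubiniS (g : S -> S -> R) :
  (forall u z, 0 <= g u z) -> (forall u, summableS (g u)) ->
  summableS (fun u => sumS (g u)) ->
  (forall z, summableS (fun u => g u z)) /\
  summableS (fun z => sumS (fun u => g u z)) /\
  sumS (fun z => sumS (fun u => g u z)) = sumS (fun u => sumS (g u)).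
Proof.
move=> Hg Hu HS.
pose a := fun M L => blk (fun u => blk (g u) L) M.
have Ha : forall M L, 0 <= a M L.
  move=> M L; apply: blk_ge0 => u; exact: blk_ge0.
have Hrow : forall u, ex_series (blk (g u)) by move=> u; apply/summable_blk.
have Hrow' : forall M, ex_series (a M).
  move=> M. rewrite /a /blk. apply: ex_series_big => e.
  case: (bst M e) => /= [u|]; first exact: Hrow.
  exists 0; exact: is_series_zero.
have EaM : forall M, Series (a M) = blk (fun u => sumS (g u)) M.
  move=> M. rewrite /a -blk_Series //. rewrite /blk. apply: eq_bigr => e _.
  case: (bst M e) => //= u. by rewrite sumS_blk.
have HS' : ex_series (fun M => Series (a M)).
  apply: (ex_series_ext (blk (fun u => sumS (g u)))); first by move=> M; rewrite EaM.
  by apply/summable_blk.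
have [Hcol [Hex Heq]] := fubini_nonneg a Ha Hrow' HS'.
have Hcolz : forall z, summableS (fun u => g u z).
  move=> z. apply/summable_blk.
  have := Hcol (lev z). apply: ex_series_le => M.
  rewrite /norm /= /abs /= Rabs_pos_eq; last by apply: blk_ge0.
  rewrite /a /blk. apply: big_le => e. case: (bst M e) => //= [u|]; last lra.
  have := big_term_le _ (fun e0 => fo (g u) (bst (lev z) e0)) (idx z) (fun e0 => fo_ge0 _ _ (Hg u)).
  by rewrite /= bst_idx.
have EaL : forall L, Series (fun M => a M L) = blk (fun z => sumS (fun u => g u z)) L.
  move=> L. rewrite /a.
  have -> : blk (fun z => sumS (fun u => g u z)) L = blk (fun z => Series (blk (fun u => g u z))) L.
    apply: eq_bigr => e _. case: (bst L e) => //= z. by rewrite sumS_blk.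
  rewrite blk_Series; last by move=> z; apply/summable_blk.
  apply: Series_ext => M. rewrite /blk.
  rewrite (eq_bigr (fun e => \big[Rplus/R0]_(e0 : (V + cfg c)%type) fo (fun u => fo (g u) (bst L e0)) (bst M e))); last by move=> e _; rewrite fo_big.
  rewrite [RHS](eq_bigr (fun e => \big[Rplus/R0]_(e0 : (V + cfg c)%type) fo (fun z => fo (fun u => g u z) (bst M e0)) (bst L e))); last by move=> e _; rewrite fo_big.
  rewrite [RHS]exchange_big /=. apply: eq_bigr => e _. apply: eq_bigr => e0 _.
  by case: (bst M e); case: (bst L e0).
split => //. split.
  apply/summable_blk. apply: (ex_series_ext _ _ EaL). exact: Hex.
rewrite sumS_blk; last first.
  apply/summable_blk. apply: (ex_series_ext _ _ EaL). exact: Hex.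
rewrite sumS_blk //. rewrite -(Series_ext _ _ EaL) Heq. apply: Series_ext => M. exact: EaM.
Qed.

End States.
Arguments bst {V c}.
Arguments fo {V c}.
Arguments blk {V c}.
Arguments Vpart {V c}.
Arguments Wlev {V c}.
Arguments blk_split {V c}.
Arguments summable_blk {V c}.
Arguments sumS_blk {V c}.
Arguments blk_ge0 {V c}.
Arguments sumS_ge0 {V c}.
Arguments lev {V c}.
Arguments idx {V c}.
Arguments bst_idx {V c}.
Arguments fo_ge0 {V c}.
Arguments sumS_term_le {V c}.
Arguments sumS_eq0 {V c}.
Arguments summableS_ext {V c}.
Arguments sumS_ext {V c}.
Arguments summableS_plus {V c}.
Arguments sumS_plus {V c}.
Arguments summableS_scal {V c}.
Arguments sumS_scal {V c}.
Arguments summableS_opp {V c}.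
Arguments sumS_minus {V c}.
Arguments summableS_dom {V c}.
Arguments sumS_Rabs {V c}.
Arguments blk_Series {V c}.
Arguments fo_big {V c}.
Arguments fubiniS {V c}.

Open Scope R_scope.

Lemma is_series_delta (p : nat) (x : R) :
  is_series (fun L : nat => if L == p then x else 0) x.
Proof.
elim: p => [|p IH].
  apply: (is_series_ext (fun L : nat => if L is 0%nat then x else 0)); first by case.
  exact: is_series_at0.
apply: is_series_decr_1. rewrite /= /plus /opp /= Ropp_0 Rplus_0_r. exact: IH.
Qed.

Lemma is_series_finsupp (h : nat -> R) N : (forall L, (N <= L)%nat -> h L = 0) ->
  is_series h (\big[Rplus/R0]_(L < N) h L).
Proof.
elim: N h => [|N IH] h Hh.
  rewrite big_ord0. apply: (is_series_ext (fun _ => 0)); last exact: is_series_zero.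
  by move=> n; rewrite Hh.
rewrite big_ord_recr /=.
apply: (is_series_ext (fun L => plus ((fun L => if (L < N)%nat then h L else 0) L) (if L == N then h N else 0))).
  move=> L /=. rewrite /plus /=. case: ltngtP => HL.
  - ring.
  - rewrite Hh //; ring.
  - rewrite HL; ring.
apply: is_series_plus; last exact: is_series_delta.
have -> : \big[Rplus/R0]_(i < N) h i = \big[Rplus/R0]_(i < N) (if (i < N)%nat then h i else 0).
  by apply: eq_bigr => i _; rewrite ltn_ord.
apply: IH => L HL. have : (L < N)%nat = false by apply/negbTE; rewrite -leqNgt.
by move=> ->.
Qed.

Lemma is_series_shift (G : nat -> R) s p : is_series G s ->
  is_series (fun L => if (p <= L)%nat then G (L - p)%nat else 0) s.
Proof.
elim: p => [|p IH] HG.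
  apply: (is_series_ext G) => // L. by rewrite leq0n subn0.
apply: is_series_decr_1. rewrite /= /plus /opp /= Ropp_0 Rplus_0_r.
apply: (is_series_ext _ _ _ _ (IH HG)) => L /=. by rewrite ltnS subSS.
Qed.

Lemma sum_n_pred (a : nat -> R) N : (0 < N)%nat -> sum_f_R0 a (Nat.pred N) = \big[Rplus/R0]_(j < N) a j.
Proof. case: N => // N _. by rewrite -sum_n_Reals sum_n_big. Qed.

Open Scope R_scope.

Section Proc.
Variables (V : finType) (c K : nat) (a b cr d : 'I_c -> Z -> R).
Variable Qr : Sst V c -> Sst V c -> R.
Hypothesis Hs : process_structure K a b cr d Qr.
Notation S := (Sst V c).
Implicit Types (f g : S -> R) (z u : S).

Lemma rate_ge0 i k : (k <= Z.of_nat K)%Z ->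
  0 <= a i k /\ 0 <= b i k /\ 0 <= cr i k /\ 0 <= d i k.
Proof. case: Hs => H _; exact: H. Qed.

Lemma jrate_ge0 i k s0 s1 : (k <= Z.of_nat K)%Z -> 0 <= jrate a b cr d i k s0 s1.
Proof. move=> /(rate_ge0 i) [? [? [? ?]]]. rewrite /jrate; case: s0; case: s1; lra. Qed.

Lemma trate_ge0 i k s : (k <= Z.of_nat K)%Z -> 0 <= trate a b cr d i k s.
Proof. move=> Hk. rewrite /trate. have := jrate_ge0 i k s true Hk. have := jrate_ge0 i k s false Hk. lra. Qed.

Lemma trate_ex i s : ex_series (fun j : nat => trate a b cr d i (Z.of_nat K - Z.of_nat j)%Z s).
Proof.
case: Hs => _ [H _]. have [Ha [Hb [Hc Hd]]] := H i.
rewrite /trate /jrate. case: s.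
  apply: (ex_series_ext (fun j => plus (cr i (Z.of_nat K - Z.of_nat j)%Z) (d i (Z.of_nat K - Z.of_nat j)%Z))) => //.
  exact: ex_series_plus.
apply: (ex_series_ext (fun j => plus (a i (Z.of_nat K - Z.of_nat j)%Z) (b i (Z.of_nat K - Z.of_nat j)%Z))) => //.
exact: ex_series_plus.
Qed.

Lemma Wtotal_ge0 sg : 0 <= Wtotal K a b cr d sg.
Proof.
apply: big_ge0 => i. apply: Series_ge0; last exact: trate_ex.
move=> j; apply: trate_ge0; lia.
Qed.

Lemma QWW_ge0 n m : 0 <= QWW K a b cr d n m.
Proof.
apply: big_ge0 => i; apply: big_ge0 => j; apply: big_ge0 => s1.
case: ifP => _; last lra. apply: jrate_ge0; lia.
Qed.

Lemma Wlev_QWW (n : Wst c) L :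
  \big[Rplus/R0]_(sg : cfg c) QWW K a b cr d n (L, sg) =
  \big[Rplus/R0]_(i < c) \big[Rplus/R0]_(j < n.1 + K + 1) \big[Rplus/R0]_(s1 : bool)
     (if (n.1 + K - j)%N == L then jrate a b cr d i (Z.of_nat K - Z.of_nat j) (n.2 i) s1 else 0).
Proof.
rewrite /QWW exchange_big /=. apply: eq_bigr => i _.
rewrite exchange_big /=. apply: eq_bigr => j _.
rewrite exchange_big /=. apply: eq_bigr => s1 _.
rewrite (bigD1 (setbit n.2 i s1)) //= big1 /=.
  rewrite xpair_eqE eqxx andbT. case: ifP => _ //=; ring.
move=> sg Hsg. rewrite xpair_eqE. case: ifP => //. move/andP=> [_ /eqP E].
by rewrite E eqxx in Hsg.
Qed.

Lemma big_ind_ord (N x : nat) (J : R) : (x < N)%nat ->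
  \big[Rplus/R0]_(L < N) (if x == L then J else 0) = J.
Proof.
move=> Hx. rewrite (bigD1 (Ordinal Hx)) //= eqxx big1 /=; first ring.
move=> L HL. case: eqP => // E. exfalso. move/negP: HL; apply. apply/eqP; apply: val_inj => /=. by rewrite E.
Qed.

Definition Ptot (n : Wst c) := \big[Rplus/R0]_(i < c) \big[Rplus/R0]_(j < n.1 + K + 1)
   trate a b cr d i (Z.of_nat K - Z.of_nat j) (n.2 i).

Lemma is_series_QWW (n : Wst c) :
  is_series (fun L => \big[Rplus/R0]_(sg : cfg c) QWW K a b cr d n (L, sg)) (Ptot n).
Proof.
apply: (is_series_ext (fun L => \big[Rplus/R0]_(i < c) \big[Rplus/R0]_(j < n.1 + K + 1) \big[Rplus/R0]_(s1 : bool)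
     (if (n.1 + K - j)%N == L then jrate a b cr d i (Z.of_nat K - Z.of_nat j) (n.2 i) s1 else 0))).
  by move=> L; rewrite Wlev_QWW.
have -> : Ptot n = \big[Rplus/R0]_(L < n.1 + K + 1) \big[Rplus/R0]_(i < c) \big[Rplus/R0]_(j < n.1 + K + 1) \big[Rplus/R0]_(s1 : bool)
     (if (n.1 + K - j)%N == L then jrate a b cr d i (Z.of_nat K - Z.of_nat j) (n.2 i) s1 else 0).
  rewrite exchange_big /=. apply: eq_bigr => i _.
  rewrite exchange_big /=. apply: eq_bigr => j _.
  rewrite exchange_big /= big_bool /=. rewrite /trate. congr (_ + _).
    rewrite big_ind_ord //. have := ltn_ord j. lia.
  rewrite big_ind_ord //. have := ltn_ord j. lia.
apply: is_series_finsupp => L HL. apply: big1 => i _. apply: big1 => j _. apply: big1 => s1 _.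
case: eqP => // E. exfalso. move: HL. rewrite -E. lia.
Qed.

Lemma Wtotal_split (n : Wst c) :
  Wtotal K a b cr d n.2 = Ptot n + QWV_total a b cr d n.
Proof.
rewrite /Wtotal /Ptot /QWV_total -big_split /=. apply: eq_bigr => i _.
rewrite (Series_incr_n _ (n.1 + K + 1)); [|lia|exact: trate_ex].
rewrite sum_n_pred; last lia. congr (_ + _). apply: Series_ext => j.
congr trate. lia.
Qed.

Lemma offQ_W (n : Wst c) L sg :
  offQ Qr (inr n) (inr (L, sg)) = if (L, sg) == n then 0 else QWW K a b cr d n (L, sg).
Proof.
rewrite /offQ. case: eqP => [[->]|Hne]; first by rewrite eqxx.
case: eqP => [E|Hne2]; first by exfalso; apply: Hne; rewrite E.
case: Hs => _ [_ [_ [HWW _]]]. apply: HWW => E; apply: Hne2. by case: E.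
Qed.

Lemma big_minus (T : finType) (F G : T -> R) :
  \big[Rplus/R0]_(i : T) (F i - G i) = \big[Rplus/R0]_(i : T) F i - \big[Rplus/R0]_(i : T) G i.
Proof.
rewrite (eq_bigr (fun i => F i + - G i)) // big_split /= -big_opp. ring.
Qed.

Lemma Wlev_offQ (n : Wst c) L :
  Wlev (offQ Qr (inr n)) L = \big[Rplus/R0]_(sg : cfg c) QWW K a b cr d n (L, sg)
     - (if L == n.1 then QWW K a b cr d n n else 0).
Proof.
rewrite /Wlev (eq_bigr (fun sg => QWW K a b cr d n (L, sg) - (if (L, sg) == n then QWW K a b cr d n (L, sg) else 0))); last first.
  move=> sg _; rewrite offQ_W; case: ifP => _; ring.
rewrite big_minus. congr (_ - _).
case: (n) => n1 n2 /=. case: eqP => [->|HL].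
  rewrite (bigD1 n2) //= eqxx big1 /=; first ring.
  move=> sg Hsg. rewrite xpair_eqE eqxx /=. by rewrite (negbTE Hsg).
apply: big1 => sg _. rewrite xpair_eqE. case: eqP => //.
Qed.

Lemma outrate_W (n : Wst c) :
  summableS (offQ Qr (inr n)) /\
  outrate Qr (inr n) = Wtotal K a b cr d n.2 - QWW K a b cr d n n.
Proof.
have Hser : is_series (Wlev (offQ Qr (inr n))) (Ptot n - QWW K a b cr d n n).
  apply: (is_series_ext (fun L => plus (\big[Rplus/R0]_(sg : cfg c) QWW K a b cr d n (L, sg))
     (opp (if L == n.1 then QWW K a b cr d n n else 0)))).
    by move=> L; rewrite Wlev_offQ.
  apply: is_series_plus; first exact: is_series_QWW.
  apply: is_series_opp. exact: is_series_delta.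
split; first by exists (Ptot n - QWW K a b cr d n n).
rewrite /outrate /sumS (is_series_unique _ _ Hser) Wtotal_split.
have -> : \big[Rplus/R0]_(v : V) offQ Qr (inr n) (inl v) = QWV_total a b cr d n.
  case: Hs => _ [_ [_ [_ [HWV _]]]]. rewrite -HWV. apply: eq_bigr => v _. by rewrite /offQ.
ring.
Qed.

Lemma offQ_ge0 x y : 0 <= offQ Qr x y.
Proof.
rewrite /offQ. case: eqP => [_|Hne]; first lra.
case: Hs => _ [_ [Hpos _]]. apply: Hpos => E; apply: Hne; by rewrite E.
Qed.

Lemma summable_offQ x : summableS (offQ Qr x).
Proof.
case: x => [v|n]; last by case: (outrate_W n).
by case: Hs => _ [_ [_ [_ [_ [_ H]]]]].
Qed.

Lemma outrate_ge0 x : 0 <= outrate Qr x.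
Proof. apply: sumS_ge0; [exact: offQ_ge0 | exact: summable_offQ]. Qed.

Lemma Qr_le_out u z : u <> z -> Qr u z <= outrate Qr u.
Proof.
move=> Hne. have -> : Qr u z = offQ Qr u z.
  rewrite /offQ; case: eqP => // E. by exfalso; apply: Hne.
apply: sumS_term_le; [exact: offQ_ge0 | exact: summable_offQ].
Qed.

Definition Bnd := \big[Rplus/R0]_(v : V) outrate Qr (inl v) + \big[Rplus/R0]_(sg : cfg c) Wtotal K a b cr d sg.

Lemma out_le_B u : outrate Qr u <= Bnd.
Proof.
rewrite /Bnd. have H1 : 0 <= \big[Rplus/R0]_(v : V) outrate Qr (inl v) by apply: big_ge0 => v; exact: outrate_ge0.
have H2 : 0 <= \big[Rplus/R0]_(sg : cfg c) Wtotal K a b cr d sg by apply: big_ge0 => sg; exact: Wtotal_ge0.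
case: u => [v|n].
  have /= H3 := big_term_le _ (fun v => outrate Qr (inl v)) v (fun v => outrate_ge0 (inl v)).
  apply: Rle_trans H3 _. rewrite -[X in X <= _]Rplus_0_r. apply: Rplus_le_compat; [exact: Rle_refl | exact: H2].
have [_ ->] := outrate_W n. have := QWW_ge0 n n.
have /= H3 := big_term_le _ (fun sg => Wtotal K a b cr d sg) n.2 Wtotal_ge0.
move=> H4. apply: (Rle_trans _ (Wtotal K a b cr d n.2)); first lra.
apply: Rle_trans H3 _. rewrite -[X in X <= _]Rplus_0_l. apply: Rplus_le_compat; [exact: H1 | exact: Rle_refl].
Qed.

Lemma Bnd_ge0 : 0 <= Bnd.
Proof. have := out_le_B (inr (0%nat, [ffun=> false])). have := outrate_ge0 (inr (0%nat, [ffun=> false])). lra. Qed.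
End Proc.

Open Scope R_scope.

Section Bits.
Variable c : nat.
Lemma setbit_i (sg : cfg c) i s : setbit sg i s i = s.
Proof. by rewrite /setbit ffunE eqxx. Qed.
Lemma setbit_setbit (sg : cfg c) i s t : setbit (setbit sg i s) i t = setbit sg i t.
Proof. apply/ffunP => j; rewrite !ffunE. by case: (j == i). Qed.
Lemma setbit_id (sg : cfg c) i : setbit sg i (sg i) = sg.
Proof. apply/ffunP => j; rewrite !ffunE. by case: eqP => [->|]. Qed.
Lemma setbit_eq (sg sg' : cfg c) i bb : setbit sg' i bb = sg -> sg' = setbit sg i (sg' i).
Proof. move=> <-. by rewrite setbit_setbit setbit_id. Qed.
Lemma setbit_ne (sg : cfg c) i : setbit sg i true != setbit sg i false.
Proof. apply/negP => /eqP E. have := congr1 (fun f : cfg c => f i) E. by rewrite !setbit_i. Qed.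

Lemma sum_setbit1 i (sg : cfg c) bb (H : cfg c -> R) :
  \big[Rplus/R0]_(sg' : cfg c) (if setbit sg' i bb == sg then H sg' else 0) =
  if sg i == bb then H (setbit sg i true) + H (setbit sg i false) else 0.
Proof.
case: eqP => Hbb.
- rewrite (bigD1 (setbit sg i true)) //= setbit_setbit -Hbb setbit_id eqxx.
  rewrite (bigD1 (setbit sg i false)) /=; last by rewrite eq_sym setbit_ne.
  rewrite setbit_setbit setbit_id eqxx big1 /=; first ring.
  move=> sg' /andP [H1 H2]. case: eqP => // E. exfalso.
  have E' := setbit_eq _ _ _ _ E. move: H1 H2. rewrite E'. by case: (sg' i); rewrite eqxx.
- apply: big1 => sg' _. case: eqP => // E. exfalso; apply: Hbb.
  by rewrite -E setbit_i.
Qed.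

Lemma sum_setbit i (sg : cfg c) (G : cfg c -> bool -> R) :
  \big[Rplus/R0]_(sg' : cfg c) \big[Rplus/R0]_(s1 : bool) (if setbit sg' i s1 == sg then G sg' s1 else 0) =
  G (setbit sg i true) (sg i) + G (setbit sg i false) (sg i).
Proof.
rewrite exchange_big big_bool /= !sum_setbit1.
case E: (sg i); rewrite eqxx /=; ring.
Qed.
End Bits.

Section Bal.
Variables (V : finType) (c K : nat) (a b cr d : 'I_c -> Z -> R).
Variable Qr : Sst V c -> Sst V c -> R.
Hypothesis Hs : process_structure K a b cr d Qr.
Notation S := (Sst V c).
Implicit Types (f g : S -> R) (z u : S).

Definition rrhs (y : nat -> cfg c -> R) (n0 : nat) (sg : cfg c) (i : 'I_c) (j : nat) : R :=
  let k := (Z.of_nat K - Z.of_nat j)%Z in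
  let m0 := (n0 - K + j)%nat in
  if sg i then a i k * y m0 (setbit sg i false) + cr i k * y m0 sg
  else b i k * y m0 sg + d i k * y m0 (setbit sg i true).

Lemma big_ind_ordj (N x : nat) (F : nat -> R) :
  \big[Rplus/R0]_(j < N) (if x == j then F (nat_of_ord j) else 0) = if (x < N)%nat then F x else 0.
Proof.
case: ifP => Hx.
  rewrite (bigD1 (Ordinal Hx)) //= eqxx big1 /=; first ring.
  move=> L HL. case: eqP => // E. exfalso. move/negP: HL; apply. apply/eqP; apply: val_inj => /=. by rewrite E.
apply: big1 => j _. case: eqP => // E. exfalso. move: Hx. by rewrite E ltn_ord.
Qed.

Lemma level_id (y : nat -> cfg c -> R) n0 sg L : (K <= n0)%nat ->
  \big[Rplus/R0]_(sg' : cfg c) (y L sg' * QWW K a b cr d (L, sg') (n0, sg)) =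
  if (n0 - K <= L)%nat then \big[Rplus/R0]_(i < c) rrhs y n0 sg i (L - (n0 - K)) else 0.
Proof.
move=> HK.
rewrite (eq_bigr (fun sg' => \big[Rplus/R0]_(i < c) \big[Rplus/R0]_(j < L + K + 1) \big[Rplus/R0]_(s1 : bool)
   (if (L + K - j)%N == n0 then (if setbit sg' i s1 == sg then y L sg' * jrate a b cr d i (Z.of_nat K - Z.of_nat j) (sg' i) s1 else 0) else 0))); last first.
  move=> sg' _. rewrite /QWW /= big_scal_l. apply: eq_bigr => i _. rewrite big_scal_l. apply: eq_bigr => j _.
  rewrite big_scal_l. apply: eq_bigr => s1 _. rewrite xpair_eqE.
  case: (L + K - j == n0)%N; case: (setbit sg' i s1 == sg) => /=; ring.
rewrite exchange_big /=.
have Hj : forall (F : nat -> R), \big[Rplus/R0]_(j < L + K + 1) (if (L + K - j)%N == n0 then F (nat_of_ord j) else 0)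
    = if (n0 - K <= L)%nat then F (L - (n0 - K))%nat else 0.
  move=> F. case: ifP => HL; last first.
    apply: big1 => j _. case: eqP => // E. exfalso. move/negP: HL; apply. lia.
  rewrite (eq_bigr (fun j : 'I_(L + K + 1) => if (L + K - n0)%nat == j then F (nat_of_ord j) else 0)).
    rewrite big_ind_ordj. have -> : (L + K - n0 < L + K + 1)%nat by lia.
    congr F. lia.
  move=> j _. have Hj := ltn_ord j. case: eqP => E1; case: eqP => E2 //; exfalso; lia.
case: ifP => HL.
  apply: eq_bigr => i _.
  rewrite (eq_bigr (fun sg' => \big[Rplus/R0]_(j < L + K + 1) (if (L + K - j)%N == n0 then
     (\big[Rplus/R0]_(s1 : bool) (if setbit sg' i s1 == sg then y L sg' * jrate a b cr d i (Z.of_nat K - Z.of_nat j) (sg' i) s1 else 0)) else 0))); last first.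
    move=> sg' _; apply: eq_bigr => j _. case: ifP => // _. by rewrite big1.
  rewrite exchange_big /=.
  rewrite (eq_bigr (fun j : 'I_(L + K + 1) => if (L + K - j)%N == n0 then
     (fun j0 : nat => \big[Rplus/R0]_(sg' : cfg c) \big[Rplus/R0]_(s1 : bool) (if setbit sg' i s1 == sg then y L sg' * jrate a b cr d i (Z.of_nat K - Z.of_nat j0) (sg' i) s1 else 0)) (nat_of_ord j) else 0)); last first.
    move=> j _. case: ifP => // _. by rewrite big1.
  etransitivity; first exact: (Hj (fun j0 => \big[Rplus/R0]_(sg' : cfg c) \big[Rplus/R0]_(s1 : bool) (if setbit sg' i s1 == sg then y L sg' * jrate a b cr d i (Z.of_nat K - Z.of_nat j0) (sg' i) s1 else 0))).
  rewrite HL sum_setbit /rrhs.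
  have -> : (n0 - K + (L - (n0 - K)))%nat = L by lia.
  rewrite !setbit_i. case E: (sg i); rewrite /jrate /=.
    rewrite -E setbit_id. ring.
  rewrite -{1}E setbit_id. ring.
apply: big1 => i _; apply: big1 => sg' _; apply: big1 => j _; apply: big1 => s1 _. case: eqP => // E. exfalso. move/negP: HL; apply. have := ltn_ord j. lia.
Qed.


Definition inflow (y : S -> R) (z : S) := sumS (fun u => if u == z then 0 else y u * Qr u z).
Definition yW (y : S -> R) := fun (m : nat) (sg : cfg c) => y (inr (m, sg)).

Lemma balance_high (y : S -> R) n0 sg : (K <= n0)%nat ->
  (forall i, ex_series (rrhs (yW y) n0 sg i)) ->
  y (inr (n0, sg)) * Wtotal K a b cr d sg = \big[Rplus/R0]_(i < c) Series (rrhs (yW y) n0 sg i) ->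
  summableS (fun u => if u == inr (n0, sg) then 0 else y u * Qr u (inr (n0, sg))) /\
  y (inr (n0, sg)) * outrate Qr (inr (n0, sg)) = inflow y (inr (n0, sg)).
Proof.
move=> HK Hex Heq.
pose G := fun j => \big[Rplus/R0]_(i < c) rrhs (yW y) n0 sg i j.
have HG : is_series G (\big[Rplus/R0]_(i < c) Series (rrhs (yW y) n0 sg i)).
  rewrite -Series_big //. rewrite /G. apply: Series_correct. exact: ex_series_big.
set f := fun u => if u == inr (n0, sg) then 0 else y u * Qr u (inr (n0, sg)).
have Hh : forall L, Wlev f L = (if (n0 - K <= L)%nat then G (L - (n0 - K))%nat else 0)
     - (if L == n0 then y (inr (n0, sg)) * QWW K a b cr d (n0, sg) (n0, sg) else 0).
  move=> L. rewrite /Wlev (eq_bigr (fun sg' => yW y L sg' * QWW K a b cr d (L, sg') (n0, sg)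
     - (if (L, sg') == (n0, sg) then y (inr (n0, sg)) * QWW K a b cr d (n0, sg) (n0, sg) else 0))); last first.
    move=> sg' _. rewrite /f /yW. case: eqP => [[-> ->]|Hne].
      by rewrite eqxx /=; ring.
    case: Hs => _ [_ [_ [HWW _]]]. rewrite HWW; last by move=> E; apply: Hne; rewrite E.
    case: eqP => [E|]; last by move=> _; ring.
    by exfalso; apply: Hne; rewrite E.
  rewrite big_minus /G level_id //. congr (_ - _).
  case: eqP => [->|HL].
    rewrite (bigD1 sg) //= eqxx big1 /=; first ring.
    move=> sg' Hsg. rewrite xpair_eqE eqxx /=. by rewrite (negbTE Hsg).
  apply: big1 => sg' _. rewrite xpair_eqE. case: eqP => //.
have Hser : is_series (Wlev f) (\big[Rplus/R0]_(i < c) Series (rrhs (yW y) n0 sg i)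
     - y (inr (n0, sg)) * QWW K a b cr d (n0, sg) (n0, sg)).
  apply: (is_series_ext (fun L => plus (if (n0 - K <= L)%nat then G (L - (n0 - K))%nat else 0)
     (opp (if L == n0 then y (inr (n0, sg)) * QWW K a b cr d (n0, sg) (n0, sg) else 0)))).
    by move=> L; rewrite Hh.
  apply: is_series_plus; first exact: is_series_shift.
  apply: is_series_opp; exact: is_series_delta.
split; first by eexists; exact: Hser.
rewrite /inflow -/f /sumS (is_series_unique _ _ Hser) -Heq.
have -> : \big[Rplus/R0]_(v : V) f (inl v) = 0.
  apply: big1 => v _. rewrite /f /=. case: Hs => _ [_ [_ [_ [_ [HVW _]]]]].
  rewrite HVW //; ring.
have [_ ->] := outrate_W _ _ _ _ _ _ _ _ Hs (n0, sg). simpl. ring.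
Qed.
End Bal.
Arguments inflow {V c} Qr y z.
Arguments yW {V c} y m sg.

Open Scope R_scope.

Section Zero.
Variables (V : finType) (c K : nat) (a b cr d : 'I_c -> Z -> R).
Variable Qr : Sst V c -> Sst V c -> R.
Hypothesis Hs : process_structure K a b cr d Qr.
Notation S := (Sst V c).
Implicit Types (f g : S -> R) (z u : S).

Lemma Qr_ge0 u z : u <> z -> 0 <= Qr u z.
Proof. move=> H. case: Hs => _ [_ [Hpos _]]. exact: Hpos. Qed.

Lemma inflow_abs_summable (y : S -> R) z : summableS (fun u => Rabs (y u)) ->
  summableS (fun u => Rabs (if u == z then 0 else y u * Qr u z)) /\
  summableS (fun u => if u == z then 0 else y u * Qr u z).
Proof.
move=> Hy.
have H1 : summableS (fun u => Rabs (if u == z then 0 else y u * Qr u z)).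
  apply: (summableS_dom _ (fun u => Bnd _ _ K a b cr d Qr * Rabs (y u))); last exact: summableS_scal.
  move=> u. rewrite Rabs_Rabsolu. case: eqP => [_|Hne].
    rewrite Rabs_R0. apply: Rmult_le_pos; [exact: (Bnd_ge0 _ _ _ _ _ _ _ _ Hs) | exact: Rabs_pos].
  rewrite Rabs_mult Rmult_comm. apply: Rmult_le_compat_r; first exact: Rabs_pos.
  rewrite Rabs_pos_eq; last exact: Qr_ge0.
  apply: Rle_trans (Qr_le_out _ _ _ _ _ _ _ _ Hs _ _ Hne) _. exact: (out_le_B _ _ _ _ _ _ _ _ Hs).
split => //. apply: (summableS_dom _ _ _ H1) => u; lra.
Qed.

Lemma zero_prop (y : S -> R) s0 :
  irreducible Qr ->
  summableS (fun u => Rabs (y u)) ->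
  y s0 = 0 ->
  (forall z, z <> s0 -> y z * outrate Qr z = inflow Qr y z) ->
  forall z, y z = 0.
Proof.
move=> Hirr Hy Hs0 Hbal.
pose mu := fun u => Rabs (y u).
pose g := fun u z => mu u * offQ Qr u z.
have Hg : forall u z, 0 <= g u z.
  move=> u z; apply: Rmult_le_pos; [exact: Rabs_pos | exact: (offQ_ge0 _ _ _ _ _ _ _ _ Hs)].
have Hgu : forall u, summableS (g u) by move=> u; apply: summableS_scal; exact: (summable_offQ _ _ _ _ _ _ _ _ Hs).
have HS : summableS (fun u => sumS (g u)).
  apply: (summableS_dom _ (fun u => Bnd _ _ K a b cr d Qr * mu u)); last exact: summableS_scal.
  move=> u. rewrite /g sumS_scal Rabs_pos_eq; last first.
    apply: Rmult_le_pos; [exact: Rabs_pos | exact: (outrate_ge0 _ _ _ _ _ _ _ _ Hs)].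
  rewrite Rmult_comm. apply: Rmult_le_compat_r; [exact: Rabs_pos | exact: (out_le_B _ _ _ _ _ _ _ _ Hs)].
have [Hcol [HT Hfub]] := fubiniS g Hg Hgu HS.
pose T := fun z => sumS (fun u => g u z).
have gE : forall u z, g u z = Rabs (if u == z then 0 else y u * Qr u z).
  move=> u z. rewrite /g /mu /offQ. case: eqP => [->|Hne]; first by rewrite eqxx Rabs_R0; ring.
  case: eqP => [E|_]; first by exfalso; apply: Hne.
  rewrite Rabs_mult (Rabs_pos_eq (Qr u z)) //. apply: Qr_ge0 => E; apply: Hne; by rewrite E.
have Hle : forall z, mu z * outrate Qr z <= T z.
  move=> z. case: (eqVneq z s0) => [->|Hne].
    rewrite /mu Hs0 Rabs_R0 Rmult_0_l. apply: sumS_ge0 => // u; exact: Hg.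
  have <- : Rabs (y z * outrate Qr z) = mu z * outrate Qr z.
    rewrite Rabs_mult (Rabs_pos_eq (outrate Qr z)) //; exact: (outrate_ge0 _ _ _ _ _ _ _ _ Hs).
  rewrite Hbal; last by apply/eqP.
  rewrite /T (sumS_ext _ (fun u => Rabs (if u == z then 0 else y u * Qr u z))); last by move=> u; rewrite gE.
  apply: sumS_Rabs. exact: (proj1 (inflow_abs_summable y z Hy)).
have Hmo : summableS (fun z => mu z * outrate Qr z).
  apply: (summableS_ext (fun u => sumS (g u))) => // u. by rewrite /g sumS_scal.
have HD : forall z, T z - mu z * outrate Qr z = 0.
  move=> z. apply: (sumS_eq0 (fun z => T z - mu z * outrate Qr z)).
  - move=> z'; have := Hle z'; lra.
  - apply: (summableS_ext (fun z => T z + (-1) * (mu z * outrate Qr z))); first by move=> z'; ring.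
    apply: summableS_plus => //. exact: summableS_scal.
  - rewrite sumS_minus //. rewrite /T Hfub.
    rewrite (sumS_ext _ (fun z => mu z * outrate Qr z)); first ring.
    by move=> u; rewrite /g sumS_scal.
have Hpred : forall u z, qstep Qr u z -> mu z = 0 -> mu u = 0.
  move=> u z [Hne Hpos] Hz.
  have HTz : T z = 0 by have := HD z; rewrite Hz; lra.
  have := sumS_eq0 (fun u => g u z) u (fun u => Hg u z) (Hcol z) HTz.
  rewrite /g /offQ. case: eqP => [E|_]; first by exfalso; apply: Hne.
  move=> H. case: (Rmult_integral _ _ H) => // E. lra.
move=> z. suff H : mu z = 0. { case: (Req_dec (y z) 0) => // Hne; exfalso; exact: (Rabs_no_R0 _ Hne H). }
have key : forall x w, clos_refl_trans _ (qstep Qr) x w -> mu w = 0 -> mu x = 0.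
  move=> x w; elim => [x0 y0 Hst|x0|x0 y0 z0 _ IH1 _ IH2]; [exact: Hpred|done|by move=> h; apply: IH1; apply: IH2].
apply: (key z s0 (Hirr z s0)). by rewrite /mu Hs0 Rabs_R0.
Qed.
End Zero.

Open Scope R_scope.

Definition part (p : bool) (z : C) : R := if p then Im z else Re z.

Lemma sum_n_part p (a : nat -> C) N : sum_n (fun n => part p (a n)) N = part p (sum_n a N).
Proof.
case: p; (elim: N => [|N IH]; first by rewrite !sum_O); by rewrite !sum_Sn IH.
Qed.

Lemma is_series_part p (a : nat -> C) l : is_series a l -> is_series (fun n => part p (a n)) (part p l).
Proof.
move=> H. rewrite /is_series.
apply: (filterlim_ext (fun N => part p (sum_n a N))); first by move=> N; rewrite sum_n_part.
apply: filterlim_comp; first exact: H.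
move: H; case: l => l1 l2 H. case: p => /=.
  exact: (continuous_snd l1 l2).
exact: (continuous_fst l1 l2).
Qed.

Lemma part_big p (T : finType) (F : T -> C) :
  part p (\big[Cplus/RtoC 0]_(i : T) F i) = \big[Rplus/R0]_(i : T) part p (F i).
Proof.
apply: (big_rec2 (fun x y => part p y = x)); first by case: p.
move=> i x y _ <-. by case: p.
Qed.

Lemma inner_part c K (a b cr d : 'I_c -> Z -> R) q p :
  inner_solution K a b cr d q -> forall n0 sg, (K <= n0)%nat ->
  (forall i, ex_series (rrhs c K a b cr d (fun m s => part p (q m s)) n0 sg i)) /\
  part p (q n0 sg) * Wtotal K a b cr d sg =
    \big[Rplus/R0]_(i < c) Series (rrhs c K a b cr d (fun m s => part p (q m s)) n0 sg i).
Proof.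
move=> Hq n0 sg HK. have [l [Hl Heq]] := Hq n0 sg HK.
have E : forall i j, part p (rhs_term K a b cr d q n0 sg i j) = rrhs c K a b cr d (fun m s => part p (q m s)) n0 sg i j.
  move=> i j. rewrite /rhs_term /rrhs /Cmult /Cplus /RtoC /=.
  case: (sg i); case: p => /=; rewrite /Re /Im; ring.
have Hs : forall i, is_series (rrhs c K a b cr d (fun m s => part p (q m s)) n0 sg i) (part p (l i)).
  move=> i. apply: (is_series_ext _ _ _ (E i)). exact: is_series_part.
split; first by move=> i; eexists; exact: Hs.
rewrite (eq_bigr (fun i => part p (l i))); last by move=> i _; apply: is_series_unique.
rewrite -part_big -Heq /Cmult /RtoC /part /=. case: (p) => /=; rewrite /Re /Im /=; ring.
Qed.

Section SumBig.
Variables (V : finType) (c : nat).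
Notation S := (Sst V c).

Lemma summableS_zero : summableS (fun _ : S => 0).
Proof.
apply: (ex_series_ext (fun _ => 0)); first by move=> n; rewrite big1.
exists 0; exact: is_series_zero.
Qed.

Lemma sumS_zero : sumS (fun _ : S => 0) = 0.
Proof.
rewrite /sumS big1 // (Series_ext _ (fun _ => 0)); first by rewrite Series_zero; ring.
by move=> n; rewrite big1.
Qed.

Lemma sumS_bigseq (T : eqType) (r : seq T) (h : T -> S -> R) : (forall i, summableS (h i)) ->
  summableS (fun u => \big[Rplus/R0]_(i <- r) h i u) /\
  sumS (fun u => \big[Rplus/R0]_(i <- r) h i u) = \big[Rplus/R0]_(i <- r) sumS (h i).
Proof.
move=> Hh. elim: r => [|x r [IH1 IH2]].
  rewrite big_nil. split.
    apply: (summableS_ext (fun _ => 0)); [by move=> u; rewrite big_nil | exact: summableS_zero].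
  rewrite (sumS_ext _ (fun _ => 0)); [exact: sumS_zero | by move=> u; rewrite big_nil].
have E : forall u, \big[Rplus/R0]_(i <- x :: r) h i u = h x u + \big[Rplus/R0]_(i <- r) h i u.
  by move=> u; rewrite big_cons.
split.
  apply: (summableS_ext _ _ (fun u => esym (E u))). exact: summableS_plus.
rewrite (sumS_ext _ _ E) sumS_plus // big_cons IH2 //.
Qed.

Lemma sumS_big (T : finType) (h : T -> S -> R) : (forall i, summableS (h i)) ->
  summableS (fun u => \big[Rplus/R0]_(i : T) h i u) /\
  sumS (fun u => \big[Rplus/R0]_(i : T) h i u) = \big[Rplus/R0]_(i : T) sumS (h i).
Proof. exact: sumS_bigseq. Qed.
End SumBig.

Open Scope R_scope.

Lemma part_le_Cmod p z : Rabs (part p z) <= Cmod z.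
Proof.
case: p => /=; last exact: re_le_Cmod.
have -> : Im z = Re (Cmult (0, -1) z) by rewrite /Cmult /Re /Im /=; ring.
apply: Rle_trans (re_le_Cmod _) _. rewrite Cmod_mult.
have -> : Cmod (0, -1) = 1.
  rewrite /Cmod /=. have -> : (0 * (0 * 1) + -1 * (-1 * 1)) = 1 by ring. exact: sqrt_1.
lra.
Qed.

Section Main.
Variables (V : finType) (c K : nat) (a b cr d : 'I_c -> Z -> R).
Variable Qr : Sst V c -> Sst V c -> R.
Hypothesis Hs : process_structure K a b cr d Qr.
Variables (m : nat) (qs : 'I_m -> nat -> cfg c -> C).
Hypothesis Hq : forall j, inner_solution K a b cr d (qs j) /\ abs_convergent (qs j).
Notation S := (Sst V c).
Implicit Types (u z : S).

Definition unitC (bb : bool) : C := if bb then (0, 1) else (1, 0).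
Definition baseC (x : ('I_m + V)%type) (u : S) : C :=
  match x with
  | inl j => match u with inl _ => RtoC 0 | inr n => qs j n.1 n.2 end
  | inr v => if u == inl v then RtoC 1 else RtoC 0
  end.
Definition Fb (i : (('I_m + V) * bool)%type) (p : bool) (u : S) : R :=
  part p (Cmult (unitC i.2) (baseC i.1 u)).
Definition Dres (y : S -> R) (z : S) : R := y z * outrate Qr z - inflow Qr y z.
Definition liftW (h : nat -> cfg c -> R) (u : S) : R :=
  match u with inl _ => 0 | inr n => h n.1 n.2 end.

Lemma Cmod_unitC bb : Cmod (unitC bb) = 1.
Proof. case: bb; [exact: Cmod_Ci | exact: Cmod_1]. Qed.

Lemma Fb_W0 v bb p n : Fb (inr v, bb) p (inr n) = 0.
Proof. rewrite /Fb /= /Cmult /part /unitC /RtoC /=. case: bb; case: p => /=; ring. Qed.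

Lemma Fb_abs i p : summableS (fun u => Rabs (Fb i p u)).
Proof.
case: i => [[j|v] bb].
  apply: (summableS_dom _ (fun u => Cmod (baseC (inl j) u))).
    move=> u. rewrite Rabs_Rabsolu. apply: Rle_trans (part_le_Cmod _ _) _.
    by rewrite Cmod_mult Cmod_unitC Rmult_1_l; apply: Rle_refl.
  by case: (Hq j) => _ H.
apply: (ex_series_ext (fun _ => 0)).
  move=> n. rewrite big1 // => sg _. by rewrite Fb_W0 Rabs_R0.
exists 0; exact: is_series_zero.
Qed.

Lemma Dres_scal (y Y : S -> R) s z : (forall u, y u = s * Y u) -> Dres y z = s * Dres Y z.
Proof.
move=> H. rewrite /Dres /inflow.
rewrite (sumS_ext _ (fun u => s * (if u == z then 0 else Y u * Qr u z))); last first.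
  move=> u; case: eqP => _; rewrite ?H; ring.
rewrite sumS_scal H; ring.
Qed.

Lemma Fb_bal i p n0 sg : (K <= n0)%nat -> Dres (Fb i p) (inr (n0, sg)) = 0.
Proof.
move=> HK. case: i => [[j|v] bb].
- have [s [p' Hsp]] : exists s p', forall u, Fb (inl j, bb) p u = s * liftW (fun m0 s0 => part p' (qs j m0 s0)) u.
    case: bb; case: p.
    + exists 1, false => u. rewrite /Fb /liftW /unitC /Cmult /part; case: u => [v|n] /=; rewrite /Re /Im /=; ring.
    + exists (-1), true => u. rewrite /Fb /liftW /unitC /Cmult /part; case: u => [v|n] /=; rewrite /Re /Im /=; ring.
    + exists 1, true => u. rewrite /Fb /liftW /unitC /Cmult /part; case: u => [v|n] /=; rewrite /Re /Im /=; ring.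
    + exists 1, false => u. rewrite /Fb /liftW /unitC /Cmult /part; case: u => [v|n] /=; rewrite /Re /Im /=; ring.
  rewrite (Dres_scal _ _ s _ Hsp).
  have [Hex Heq] := inner_part c K a b cr d (qs j) p' (proj1 (Hq j)) n0 sg HK.
  have [_ Hb] := balance_high V c K a b cr d Qr Hs (liftW (fun m0 s0 => part p' (qs j m0 s0))) n0 sg HK Hex Heq.
  rewrite /Dres Hb; ring.
- rewrite /Dres Fb_W0 /inflow (sumS_ext _ (fun _ => 0)); first by rewrite sumS_zero; ring.
  move=> u. case: eqP => // _. case: u => [v'|n].
    case: Hs => _ [_ [_ [_ [_ [HVW _]]]]]. rewrite HVW //; ring.
  rewrite Fb_W0; ring.
Qed.

Lemma Dres_lin (beta : (('I_m + V) * bool)%type -> R) p z :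
  Dres (fun u => \big[Rplus/R0]_i (beta i * Fb i p u)) z = \big[Rplus/R0]_i (beta i * Dres (Fb i p) z).
Proof.
rewrite /Dres /inflow.
have Hsum : forall i, summableS (fun u => beta i * (if u == z then 0 else Fb i p u * Qr u z)).
  move=> i. apply: summableS_scal.
  exact: (proj2 (inflow_abs_summable V c K a b cr d Qr Hs (Fb i p) z (Fb_abs i p))).
rewrite (sumS_ext _ (fun u => \big[Rplus/R0]_i (beta i * (if u == z then 0 else Fb i p u * Qr u z)))); last first.
  move=> u. case: eqP => _.
    by rewrite big1 // => i _; ring.
  rewrite Rmult_comm big_scal_l. apply: eq_bigr => i _; ring.
have [_ ->] := sumS_big V c _ _ Hsum.
rewrite [RHS](eq_bigr (fun i => beta i * Fb i p z * outrate Qr z - beta i * sumS (fun u => if u == z then 0 else Fb i p u * Qr u z))); last first.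
  move=> i _; ring.
rewrite big_minus. congr (_ - _).
  rewrite Rmult_comm big_scal_l. apply: eq_bigr => i _; ring.
apply: eq_bigr => i _. by rewrite sumS_scal.
Qed.


Definition st (e : (V + ('I_K * cfg c))%type) : S :=
  match e with inl v => inl v | inr ks => inr (nat_of_ord ks.1, ks.2) end.

Lemma main_contra (hK : (0 < K)%nat) : irreducible Qr -> lin_indep qs -> (2 ^ c * K < m)%nat -> False.
Proof.
move=> Hirr Hli Hlt.
pose sg0 : cfg c := [ffun=> false].
pose s0 : S := inr (0%nat, sg0).
pose A := fun (i : (('I_m + V) * bool)%type) (ep : ((V + ('I_K * cfg c)) * bool)%type) =>
  if st ep.1 == s0 then Fb i ep.2 s0 else Dres (Fb i ep.2) (st ep.1).
have Hcard : (#|{: (V + ('I_K * cfg c)) * bool}| < #|{: ('I_m + V) * bool}|)%nat.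
  rewrite !card_prod !card_sum !card_prod card_bool !card_ord.
  rewrite /cfg card_ffun card_bool card_ord. lia.
have [beta [[i0 Hi0] Hbeta]] := LA.test _ _ A Hcard.
pose Y := fun p u => \big[Rplus/R0]_i (beta i * Fb i p u).
have HY0 : forall p z, Y p z = 0.
  move=> p. apply: (zero_prop V c K a b cr d Qr Hs (Y p) s0 Hirr).
  - apply: (summableS_dom _ (fun u => \big[Rplus/R0]_i (Rabs (beta i) * Rabs (Fb i p u)))).
      move=> u. rewrite Rabs_Rabsolu. apply: Rle_trans (big_Rabs _ _) _. apply: big_le => i.
      rewrite Rabs_mult; exact: Rle_refl.
    apply: (proj1 (sumS_big V c _ _ _)) => i. apply: summableS_scal. exact: Fb_abs.
  - have := Hbeta (inr (Ordinal hK, sg0), p). rewrite /A /= eqxx. done.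
  - move=> z Hz. suff : Dres (Y p) z = 0 by rewrite /Dres; lra.
    rewrite /Y Dres_lin.
    case: z Hz => [v|[n0 sg]] Hz.
      have := Hbeta (inl v, p). rewrite /A /=. done.
    case: (ltnP n0 K) => Hn0.
      have := Hbeta (inr (Ordinal Hn0, sg), p). rewrite /A /=.
      case: eqP => [E|_]; first by exfalso; apply: Hz. done.
    apply: big1 => i _. rewrite Fb_bal //; ring.
have Ydec : forall p u, Y p u = \big[Rplus/R0]_(j < m) \big[Rplus/R0]_(bb : bool) (beta (inl j, bb) * Fb (inl j, bb) p u)
                + \big[Rplus/R0]_(v : V) \big[Rplus/R0]_(bb : bool) (beta (inr v, bb) * Fb (inr v, bb) p u).
  move=> p u. rewrite /Y (eq_bigr (fun i => (fun x bb => beta (x, bb) * Fb (x, bb) p u) i.1 i.2)); last by case.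
  etransitivity; first exact: (esym (pair_bigA _ (fun x bb => beta (x, bb) * Fb (x, bb) p u))).
  by rewrite big_sumType.
have HV : forall v bb, beta (inr v, bb) = 0.
  move=> v bb. have := HY0 bb (inl v). rewrite Ydec.
  rewrite big1; last first.
    move=> j _. apply: big1 => bb' _. rewrite /Fb /= /Cmult /part /unitC /RtoC /=.
    case: bb; case: bb' => /=; ring.
  rewrite (bigD1 v) //= [\big[_/_]_(v' | v' != v) _]big1; last first.
    move=> v' Hv'. apply: big1 => bb' _. rewrite /Fb /=.
    have -> : (inl v : S) == inl v' = false by apply/negbTE; move: Hv'; apply: contra => /eqP [->].
    rewrite /Cmult /part /unitC /RtoC /=. case: bb; case: bb' => /=; ring.
  rewrite big_bool /Fb /= eqxx /Cmult /part /unitC /RtoC /=.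
  case: bb => /= H; lra.
pose alpha := fun j : 'I_m => (beta (inl j, false), beta (inl j, true)) : C.
have Hal : forall j, alpha j = RtoC 0.
  apply: Hli => n0 sg.
  have H1 : forall p, part p (\big[Cplus/RtoC 0]_(j < m) Cmult (alpha j) (qs j n0 sg)) = 0.
    move=> p. rewrite part_big. have := HY0 p (inr (n0, sg)). rewrite Ydec.
    rewrite [X in _ + X = _]big1; last first.
      move=> v _. apply: big1 => bb _. by rewrite HV Rmult_0_l.
    rewrite Rplus_0_r => <-. apply: eq_bigr => j _. rewrite big_bool /Fb /alpha /=.
    rewrite /Cmult /part /unitC /RtoC /=. case: p => /=; ring.
  move: (H1 false) (H1 true). case: (\big[Cplus/RtoC 0]_(j < m) Cmult (alpha j) (qs j n0 sg)) => x y /= -> ->.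
  done.
move: Hi0. case: i0 => [[j|v] bb]; last by rewrite HV.
have := Hal j. rewrite /alpha /RtoC. case=> H1 H2. by case: bb.
Qed.
End Main.


Close Scope R_scope.

Theorem corollary1 (V : finType) (c K : nat) (hc : (1 <= c)%N) (hK : (1 <= K)%N)
  (a b cr d : 'I_c -> Z -> R) (Qr : Sst V c -> Sst V c -> R)
  (Hstruct : process_structure K a b cr d Qr)
  (Herg : ergodic Qr) :
  forall (m : nat) (qs : 'I_m -> nat -> cfg c -> C),
    (forall j, inner_solution K a b cr d (qs j) /\ abs_convergent (qs j)) ->
    lin_indep qs ->
    (m <= 2 ^ c * K)%N.
Proof.
move=> m qs Hq Hli. rewrite leqNgt. apply/negP => Hlt.
exact: (main_contra V c K a b cr d Qr Hstruct m qs Hq hK (proj1 Herg) Hli Hlt).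
Qed.
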